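(* Let $(\varepsilon_t)_{t\in\mathbb{Z}}$ be i.i.d. copies of a random variable $\varepsilon$, let $Y$ be a measurable function and $X_t=Y(\varepsilon_t,\varepsilon_{t-1},\varepsilon_{t-2},\dots)$. Let $(\varepsilon_t^* )_{t\in\mathbb{Z}}$ be an i.i.d. copy of $(\varepsilon_t)_{t\in\mathbb{Z}}$, independent of it, and $X_t'=Y(\varepsilon_t,\dots,\varepsilon_1,\varepsilon_0^*,\varepsilon_{-1}^*,\dots)$. Let $F_X(x)=\mathbb{P}(X_0\le x)$, fix $\tau\in(0,1)$ and let $\xi_0(\tau)=\inf\{x:F_X(x)\ge\tau\}$. Suppose $F_X$ is Lipschitz continuous in a neighborhood of $\xi_0(\tau)$ and that $(\mathbb{E}|X_n-X_n'|^\alpha)^{1/\alpha}=O(\varrho^n)$ as $n\to\infty$ for some $\alpha>0$ and $\varrho\in(0,1)$. Then there exist $\delta>0$ and $\sigma\in(0,1)$ such that $$\sup_{\xi\in\mathbb{R}:\,|\xi-\xi_0(\tau)|\le\delta}\big(\mathbb{E}|1\{X_n<\xi\}-1\{X_n'<\xi\}|^2\big)^{1/2}=O(\sigma^n).$$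
   Context: $1\{\cdot\}$ denotes the indicator function. *)

(* Defs.v *)
From HB Require Import structures.
From mathcomp Require Import all_boot all_order all_algebra.
From mathcomp Require Import all_classical all_reals all_analysis.
Set Implicit Arguments. Unset Strict Implicit. Unset Printing Implicit Defensive.
Import Order.TTheory GRing.Theory Num.Theory.
Local Open Scope classical_set_scope.
Local Open Scope ring_scope.

Definition mutually_independent (d : measure_display) (Omega : measurableType d)
  (R : realType) (P : probability Omega R) (dE : measure_display)
  (E : measurableType dE) (I : eqType) (f : I -> Omega -> E) : Prop :=
  forall (s : seq I) (B : I -> set E), uniq s ->
    (forall i, i \in s -> measurable (B i)) ->
    P (\big[setI/setT]_(i <- s) (f i @^-1` B i)) =
    (\prod_(i <- s) P (f i @^-1` B i))%E.

Definition identically_distributed (d : measure_display) (Omega : measurableType d)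
  (R : realType) (P : probability Omega R) (dE : measure_display)
  (E : measurableType dE) (I : Type) (f : I -> Omega -> E) : Prop :=
  forall i j (B : set E), measurable B -> P (f i @^-1` B) = P (f j @^-1` B).

Definition coord_sets (dE : measure_display) (E : measurableType dE)
  : set (set (nat -> E)) :=
  [set A | exists (k : nat) (B : set E), measurable B /\ A = (fun s => s k) @^-1` B].

(* Measurability of Y : E^nat -> R w.r.t. the product sigma-algebra
   (generated by the coordinate projections) and the Borel sets of R. *)
Definition prod_measurable_fun (dE : measure_display) (E : measurableType dE)
  (R : realType) (Y : (nat -> E) -> R) : Prop :=
  forall B : set R, measurable B -> <<s @coord_sets dE E >> (Y @^-1` B).

(* Main.v *)
Require Import Defs.
From HB Require Import structures.
From mathcomp Require Import all_boot all_order all_algebra.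
From mathcomp Require Import all_classical all_reals all_analysis.
Import Order.TTheory GRing.Theory Num.Theory.
Local Open Scope classical_set_scope.
Local Open Scope ring_scope.
From mathcomp Require Import measurable_realfun.
From mathcomp Require Import ring lra.
Lemma preim_meas (d : measure_display) (Omega : measurableType d)
  (dE : measure_display) (E : measurableType dE) (g : Omega -> nat -> E) :
  (forall k, measurable_fun setT (fun w => g w k)) ->
  forall A, <<s @coord_sets dE E >> A -> measurable (g @^-1` A).
Proof.
move=> mg A; apply: (@smallest_sub _ _ _ [set A | measurable (g @^-1` A)]).
- split => /=.
  + by rewrite preimage_set0.
  + by move=> B mB; rewrite setTD preimage_setC; exact: measurableC.
  + by move=> F mF; rewrite preimage_bigcup; exact: bigcupT_measurable.
- move=> _ [k [B [mB ->]]] /=.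
  have := mg k measurableT B mB; rewrite setTI.
  by [].
Qed.
Lemma bigsetI_in (T : Type) (I : eqType) (s : seq I) (F : I -> set T) x :
  (\big[setI/setT]_(i <- s) F i) x <-> (forall i, i \in s -> F i x).
Proof.
elim: s => [|a s IH]; first by rewrite big_nil; split => // _ i.
rewrite big_cons; split.
- move=> [Fa /IH H] i; rewrite inE => /orP[/eqP->//|]; exact: H.
- move=> H; split; first by apply: H; rewrite inE eqxx.
  by apply/IH => i si; apply: H; rewrite inE si orbT.
Qed.

Lemma shift_law (R : realType) (d : measure_display) (Omega : measurableType d)
  (P : probability Omega R) (dE : measure_display) (E : measurableType dE)
  (eps epss : int -> Omega -> E) :
  (forall t, measurable_fun setT (eps t)) ->
  mutually_independent P (fun i : bool * int => if i.1 then epss i.2 else eps i.2) ->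
  identically_distributed P (fun i : bool * int => if i.1 then epss i.2 else eps i.2) ->
  forall t t' A, <<s @coord_sets dE E >> A ->
  P ((fun w k => eps (t - k%:Z) w) @^-1` A) = P ((fun w k => eps (t' - k%:Z) w) @^-1` A).
Proof.
move=> meps ind idd t t'.
set f := (fun i : bool * int => if i.1 then epss i.2 else eps i.2).
set g := fun (u : int) w (k : nat) => eps (u - k%:Z) w.
have mg u A : <<s @coord_sets dE E >> A -> measurable (g u @^-1` A).
  by apply: preim_meas => k; exact: meps.
pose Gp := [set A : set (nat -> E) | exists m (B : nat -> set E), (forall k, measurable (B k)) /\
   A = [set s | forall k, (k < m)%N -> B k (s k)]].
pose D := [set A : set (nat -> E) | measurable (g t @^-1` A) /\ measurable (g t' @^-1` A) /\
   P (g t @^-1` A) = P (g t' @^-1` A)].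
have key u m (B : nat -> set E) : (forall k, measurable (B k)) ->
    P (g u @^-1` [set s | forall k, (k < m)%N -> B k (s k)]) =
    (\prod_(k <- iota 0 m) P (eps (- k%:Z)%R @^-1` B k))%E.
  move=> mB.
  pose B' := fun i : bool * int => B (absz (u - i.2)).
  pose s := [seq (false, u - k%:Z) | k <- iota 0 m].
  have -> : g u @^-1` [set s | forall k, (k < m)%N -> B k (s k)] =
      \big[setI/setT]_(i <- s) (f i @^-1` B' i).
    apply/seteqP; split => w /=.
    - move=> H; apply/bigsetI_in => i /mapP[k]; rewrite mem_iota add0n => /andP[_ km] ->.
      by rewrite /f /B' /= subKr /=; apply: H.
    - move/bigsetI_in => H k km.
      have := H (false, u - k%:Z); rewrite /f /B' /= subKr /=; apply.
      by apply/mapP; exists k => //; rewrite mem_iota add0n km.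
  rewrite ind; last first.
  - by move=> i _; rewrite /B'; exact: mB.
  - by rewrite map_inj_uniq ?iota_uniq// => a b [] /addrI /oppr_inj [].
  rewrite big_map; apply: eq_bigr => k _.
  rewrite /f /B' /= subKr /=.
  have := idd (false, u - k%:Z) (false, - k%:Z) (B k) (mB k); rewrite /f /=; by [].
have GpD : Gp `<=` D.
  move=> _ [m [B [mB ->]]]; split; [|split].
  - have -> : g t @^-1` [set s | forall k, (k < m)%N -> B k (s k)] =
      \big[setI/setT]_(k <- iota 0 m) (eps (t - k%:Z) @^-1` B k).
      apply/seteqP; split => w /=.
      + by move=> H; apply/bigsetI_in => k; rewrite mem_iota add0n => /andP[_ km]; exact: H.
      + by move/bigsetI_in => H k km; apply: H; rewrite mem_iota add0n km.
    apply: bigsetI_measurable => k _; have := meps (t - k%:Z) measurableT _ (mB k).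
    by rewrite setTI.
  - have -> : g t' @^-1` [set s | forall k, (k < m)%N -> B k (s k)] =
      \big[setI/setT]_(k <- iota 0 m) (eps (t' - k%:Z) @^-1` B k).
      apply/seteqP; split => w /=.
      + by move=> H; apply/bigsetI_in => k; rewrite mem_iota add0n => /andP[_ km]; exact: H.
      + by move/bigsetI_in => H k km; apply: H; rewrite mem_iota add0n km.
    apply: bigsetI_measurable => k _; have := meps (t' - k%:Z) measurableT _ (mB k).
    by rewrite setTI.
  - by rewrite !key.
have GpI : setI_closed Gp.
  move=> _ _ [m1 [B1 [mB1 ->]]] [m2 [B2 [mB2 ->]]].
  exists (maxn m1 m2), (fun k => (if (k < m1)%N then B1 k else setT) `&`
                               (if (k < m2)%N then B2 k else setT)); split.
    by move=> k; apply: measurableI; [case: ifP|case: ifP].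
  apply/seteqP; split => x /=.
  - move=> [H1 H2] k km; split.
    + by case: ifP => // /H1.
    + by case: ifP => // /H2.
  - move=> H; split => k km.
    + have := H k; rewrite km leq_max km /= => /(_ isT) [].
      by [].
    + have := H k; rewrite km leq_max km orbT /= => /(_ isT) [].
      by [].
have cGp : @coord_sets dE E `<=` Gp.
  move=> _ [k [B [mB ->]]].
  exists k.+1, (fun j => if j == k then B else setT); split.
    by move=> j; case: ifP.
  apply/seteqP; split => x /=.
  - by move=> Bx j _; case: ifP => // /eqP ->.
  - by move=> H; have := H k (ltnSn k); rewrite eqxx.
have dD : dynkin D.
  split.
  - rewrite /D /=; rewrite !preimage_setT; split; [exact: measurableT|split; [exact: measurableT|done]].
  - move=> A [m1 [m2 e]]; rewrite /D /=.
    have -> : g t @^-1` (~` A) = ~` (g t @^-1` A) by [].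
    have -> : g t' @^-1` (~` A) = ~` (g t' @^-1` A) by [].
    split; [exact: measurableC|split; [exact: measurableC|]].
    rewrite (probability_setC _ m1) (probability_setC _ m2).
    by rewrite e.
  - move=> F tF DF; rewrite /D /=.
    have -> u : g u @^-1` (\bigcup_k F k) = \bigcup_k (g u @^-1` F k) by [].
    have tFt u : trivIset setT (fun n => g u @^-1` F n).
      move=> i j _ _ [w [Fi Fj]]; apply: tF => //; by exists (g u w).
    have m1 n : measurable (g t @^-1` F n) by case: (DF n).
    have m2 n : measurable (g t' @^-1` F n) by case: (DF n) => _ [].
    split; [exact: bigcupT_measurable|split; [exact: bigcupT_measurable|]].
    rewrite measure_bigcup; [|by move=> n _; exact: m1|exact: tFt].
    rewrite measure_bigcup; [|by move=> n _; exact: m2|exact: tFt].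
    by apply: eq_eseriesr => n _; case: (DF n) => _ [].
have lD := (dynkin_lambda_system D).1 dD.
have sub : <<s Gp >> `<=` D.
  by apply: (@lambda_system_subset _ Gp GpI setT D lD GpD).
move=> A cA.
have : D A.
  apply: sub; apply: (smallest_sub (@smallest_sigma_algebra _ setT Gp)) cA.
  by move=> X /cGp GX; exact: sub_sigma_algebra.
by move=> [_ [_ ->]].
Qed.

Lemma powRXn (R : realType) (a r : R) (n : nat) : 0 <= a -> (a ^+ n) `^ r = (a `^ r) ^+ n.
Proof.
move=> a0; rewrite -powR_mulrn // -powRrM mulrC powRrM powR_mulrn //.
exact: powR_ge0.
Qed.

Lemma eventually_lt (R : realType) (w e : R) : 0 <= w < 1 -> 0 < e ->
  exists N : nat, forall n, (N <= n)%N -> w ^+ n < e.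
Proof.
move=> /andP[w0 w1] e0.
have : `|w| < 1 by rewrite ger0_norm.
move=> /cvg_expr /cvgr0_norm_lt /(_ e e0) [N _ HN].
exists N => n Nn; have := HN n Nn; rewrite /= ger0_norm //; exact: exprn_ge0.
Qed.

Lemma moment_fin (R : realType) (J : \bar R) (alpha c : R) : 0 < alpha ->
  (0 <= J)%E -> (J `^ alpha^-1 <= c%:E)%E ->
  exists j, [/\ 0 <= j, J = j%:E & j <= c `^ alpha].
Proof.
move=> a0; case: J => [j| |] //.
- rewrite lee_fin poweR_EFin lee_fin => j0 hj; exists j; split => //.
  have -> : j = (j `^ alpha^-1) `^ alpha by rewrite -powRrM mulVf ?gt_eqF // powRr1.
  apply: ge0_ler_powR => //; first exact: ltW.
  + by rewrite nnegrE powR_ge0.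
  + by rewrite nnegrE; apply: le_trans hj; exact: powR_ge0.
- by move=> _; rewrite poweRyr ?invr_neq0 ?gt_eqF // leye_eq.
Qed.
Theorem proposition3p1 (R : realType) (d : measure_display) (Omega : measurableType d)
  (P : probability Omega R) (dE : measure_display) (E : measurableType dE)
  (eps epss : int -> Omega -> E) (Y : (nat -> E) -> R) (tau : R) :
  (forall t, measurable_fun setT (eps t)) ->
  (forall t, measurable_fun setT (epss t)) ->
  (* (eps_t) and (eps*_t) together form an i.i.d. family *)
  mutually_independent P (fun i : bool * int => if i.1 then epss i.2 else eps i.2) ->
  identically_distributed P (fun i : bool * int => if i.1 then epss i.2 else eps i.2) ->
  prod_measurable_fun Y ->
  0 < tau < 1 ->
  let X : int -> Omega -> R := fun t w => Y (fun k => eps (t - k%:Z) w) in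
  let X' : nat -> Omega -> R := fun n w =>
    Y (fun k => if (k < n)%N then eps (n%:Z - k%:Z) w else epss (n%:Z - k%:Z) w) in
  let F : R -> R := fun x => fine (P [set w | X 0 w <= x]) in
  let xi0 : R := inf [set x | tau <= F x] in
  (* F is Lipschitz continuous in a neighborhood of xi0 *)
  (exists eta L : R, 0 < eta /\
     forall x y, `|x - xi0| < eta -> `|y - xi0| < eta -> `|F x - F y| <= L * `|x - y|) ->
  (* (E|X_n - X'_n|^alpha)^(1/alpha) = O(rho^n) *)
  (exists alpha rho : R, 0 < alpha /\ 0 < rho < 1 /\
     exists (C : R) (N : nat), forall n : nat, (N <= n)%N ->
       ((\int[P]_w ((`|X n%:Z w - X' n w| `^ alpha)%:E)) `^ alpha^-1 <=
         (C * rho ^+ n)%:E)%E) ->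
  exists delta sigma : R, 0 < delta /\ 0 < sigma < 1 /\
    exists (C : R) (N : nat), forall n : nat, (N <= n)%N ->
      forall xi : R, `|xi - xi0| <= delta ->
        ((\int[P]_w ((`|\1_[set v | X n%:Z v < xi] w - \1_[set v | X' n v < xi] w| `^ 2)%:E)) `^ 2^-1 <=
          (C * sigma ^+ n)%:E)%E.
Proof.
move=> meps mepss ind idd mY _ X X' F xi0 [eta [L [eta0 Lip]]]
  [alpha [rho [alpha0 [/andP[rho0 rho1] [C [N hmom]]]]]].
have mXp u B : measurable B -> measurable (X u @^-1` B).
  move=> mB; have := @preim_meas _ _ _ _ (fun w k => eps (u - k%:Z) w)
    (fun k => meps (u - k%:Z)) (Y @^-1` B) (mY B mB).
  by [].
have mX'p n B : measurable B -> measurable (X' n @^-1` B).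
  move=> mB; have := @preim_meas _ _ _ _
    (fun w k => if (k < n)%N then eps (n%:Z - k%:Z) w else epss (n%:Z - k%:Z) w)
    _ (Y @^-1` B) (mY B mB); apply.
  by move=> k; case: (k < n)%N; [exact: meps|exact: mepss].
have stat u B : measurable B -> P (X u @^-1` B) = P (X 0 @^-1` B).
  move=> mB; have := @shift_law _ _ _ P _ _ eps epss meps ind idd u 0 (Y @^-1` B) (mY B mB).
  by [].
have mXf u : measurable_fun setT (X u).
  by move=> _ B mB; rewrite setTI; exact: mXp.
have mX'f n : measurable_fun setT (X' n).
  by move=> _ B mB; rewrite setTI; exact: mX'p.
have mle (c : R) : measurable [set x : R | x <= c].
  have -> : [set x : R | x <= c] = `]-oo, c]%classic.
    by apply/seteqP; split => x /=; rewrite in_itv.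
  exact: measurable_itv.
have mlt (c : R) : measurable [set x : R | x < c].
  have -> : [set x : R | x < c] = `]-oo, c[%classic.
    by apply/seteqP; split => x /=; rewrite in_itv.
  exact: measurable_itv.
have Fdef n c : P [set w | X n%:Z w <= c] = (F c)%:E.
  transitivity (P [set w | X 0 w <= c]); first exact: (stat n%:Z _ (mle c)).
  rewrite /F fineK // fin_num_measure //; exact: (mXp 0 _ (mle c)).
have L0 : 0 <= L.
  have := Lip xi0 (xi0 + eta / 2).
  rewrite subrr normr0 addrC addKr ger0_norm ?divr_ge0 ?(ltW eta0) //.
  have e2 : eta / 2 < eta by lra.
  move=> /(_ eta0 e2) H.
  have : 0 <= L * `|xi0 - (xi0 + eta / 2)| by exact: le_trans (normr_ge0 _) H.
  have -> : xi0 - (xi0 + eta / 2) = - (eta / 2) by rewrite opprD addrA subrr add0r.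
  rewrite normrN ger0_norm; last by lra.
  by rewrite pmulr_lge0 //; lra.
have C0 : 0 <= C.
  have := hmom N (leqnn N) => /(le_trans (poweR_ge0 _ _)); rewrite lee_fin.
  by rewrite pmulr_lge0 // exprn_gt0.
pose u0 := (1 + rho) / 2.
have u00 : 0 < u0 by rewrite /u0; lra.
have u01 : u0 < 1 by rewrite /u0; lra.
have ru0 : rho < u0 by rewrite /u0; lra.
pose v := rho `^ alpha / u0 `^ alpha.
have pra : 0 < rho `^ alpha by exact: powR_gt0.
have pua : 0 < u0 `^ alpha by exact: powR_gt0.
have rua : rho `^ alpha < u0 `^ alpha.
  by apply: gt0_ltr_powR => //; rewrite nnegrE ltW.
have v0 : 0 < v by rewrite /v divr_gt0.
have v1 : v < 1 by rewrite /v ltr_pdivrMr // mul1r.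
pose w := 1 - (1 - u0) * (1 - v).
have w0 : 0 < w by rewrite /w; nra.
have w1 : w < 1 by rewrite /w; nra.
have uw : u0 <= w by rewrite /w; nra.
have vw : v <= w by rewrite /w; nra.
pose K := 3 * L + C `^ alpha.
have K0 : 0 <= K by rewrite /K; have := powR_ge0 C alpha; lra.
have w01 : 0 <= w < 1 by rewrite w1 andbT ltW.
have [N1 HN1] := @eventually_lt R w (eta / 8) w01 ltac:(lra).
exists (eta / 4), (w `^ 2^-1); split; first lra.
split.
  apply/andP; split; first exact: powR_gt0.
  have H1 : (1:R) `^ 2^-1 = 1 by rewrite powR1.
  rewrite -[X in _ < X]H1.
  by apply: gt0_ltr_powR => //; rewrite ?invr_gt0 // nnegrE ltW.
exists (K `^ 2^-1), (maxn N N1) => n; rewrite geq_max => /andP[Nn N1n] xi hxi.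
pose h := u0 ^+ n.
have h0 : 0 < h by exact: exprn_gt0.
have hw : h <= w ^+ n by apply: lerXn2r; rewrite // nnegrE ltW.
have wn := HN1 n N1n.
have wn0 : 0 <= w ^+ n by rewrite exprn_ge0 // ltW.
have Jge : (0 <= \int[P]_x (`|X n%:Z x - X' n x| `^ alpha)%:E)%E.
  by apply: integral_ge0 => x _; rewrite lee_fin powR_ge0.
have [j [j0 Jeq jle]] := @moment_fin R _ alpha (C * rho ^+ n) alpha0 Jge (hmom n Nn).
rewrite powRM // in jle; last by rewrite exprn_ge0 // ltW.
rewrite powRXn in jle; last exact: ltW.
pose Bset := [set x | h < `|X n%:Z x - X' n x|].
have mZ : measurable_fun setT (fun x => `|X n%:Z x - X' n x|).
  apply: measurableT_comp; first exact: normr_measurable.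
  exact: measurable_funB.
have mB : measurable Bset.
  have -> : Bset = (fun x => `|X n%:Z x - X' n x|) @^-1` `]h, +oo[%classic.
    by apply/seteqP; split => x /=; rewrite in_itv /= andbT.
  by have := mZ measurableT _ (measurable_itv `]h, +oo[); rewrite setTI.
have pB : (P Bset <= ((h `^ alpha)^-1 * j)%:E)%E.
  rewrite -(setIT Bset) -(integral_indic P measurableT mB).
  have -> : (((h `^ alpha)^-1 * j)%:E =
      \int[P]_x (((h `^ alpha)^-1)%:E * (`|X n%:Z x - X' n x| `^ alpha)%:E))%E.
    rewrite (@ge0_integralZl_EFin _ _ _ P setT measurableT
      (fun x => (`|X n%:Z x - X' n x| `^ alpha)%:E)).
    - by rewrite Jeq.
    - by move=> x _ /=; rewrite lee_fin powR_ge0.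
    - apply/measurable_EFinP; exact: (measurableT_comp (measurable_powR alpha) mZ).
    - by rewrite invr_ge0 powR_ge0.
  apply: (@ge0_le_integral _ _ _ P setT measurableT).
  - by move=> x _ /=; rewrite lee_fin indicE.
  - by apply/measurable_EFinP; exact: measurable_indic.
  - apply: emeasurable_funM; first exact: measurable_cst.
    apply/measurable_EFinP; exact: (measurableT_comp (measurable_powR alpha) mZ).
  - move=> x _; rewrite -EFinM lee_fin indicE.
    case: (boolP (x \in Bset)) => xB /=.
    + rewrite mulrC ler_pdivlMr ?powR_gt0 // mul1r.
      apply: ge0_ler_powR; first exact: ltW.
      * by rewrite nnegrE ltW.
      * by rewrite nnegrE.
      * by apply: ltW; exact: (set_mem xB).
    + by rewrite mulr_ge0 ?invr_ge0 ?powR_ge0.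
pose A1 := [set x | X n%:Z x <= xi + h].
pose A2 := [set x | X n%:Z x <= xi - 2 * h].
pose Aset := A1 `\` A2.
have mA1 : measurable A1 by exact: (mXp n%:Z _ (mle _)).
have mA2 : measurable A2 by exact: (mXp n%:Z _ (mle _)).
have mA : measurable Aset by exact: measurableD.
have fA : P Aset = (fine (P Aset))%:E by rewrite fineK // fin_num_measure.
have pA : fine (P Aset) = F (xi + h) - F (xi - 2 * h).
  have := measureDI P mA1 mA2.
  have -> : A1 `&` A2 = A2.
    apply/setIidr => x; rewrite /A1 /A2 /= => hx; lra.
  move=> H.
  have H' : (F (xi + h))%:E = (fine (P Aset))%:E + (F (xi - 2 * h))%:E.
    rewrite -(Fdef n (xi + h)) -(Fdef n (xi - 2 * h)) -fA; exact: H.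
  move: H'; rewrite -EFinD => -[->]; lra.
have hxi' := hxi; move: hxi'; rewrite ler_norml => /andP[hx1 hx2].
have pA' : fine (P Aset) <= 3 * L * w ^+ n.
  rewrite pA; apply: le_trans (ler_norm _) _.
  apply: le_trans (Lip _ _ _ _) _.
  - rewrite ltr_norml; apply/andP; split; lra.
  - rewrite ltr_norml; apply/andP; split; lra.
  - have -> : xi + h - (xi - 2 * h) = 3 * h by ring.
    rewrite ger0_norm; last lra.
    nra.
have fB : P Bset = (fine (P Bset))%:E by rewrite fineK // fin_num_measure.
have pB' : fine (P Bset) <= C `^ alpha * w ^+ n.
  have : fine (P Bset) <= (h `^ alpha)^-1 * j by rewrite -lee_fin -fB.
  move/le_trans; apply.
  have hU : h `^ alpha = (u0 `^ alpha) ^+ n by rewrite /h powRXn // ltW.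
  have Un : 0 < (u0 `^ alpha) ^+ n by exact: exprn_gt0.
  apply: (@le_trans _ _ ((h `^ alpha)^-1 * (C `^ alpha * (rho `^ alpha) ^+ n))).
    by rewrite ler_wpM2l // invr_ge0 powR_ge0.
  have -> : (h `^ alpha)^-1 * (C `^ alpha * (rho `^ alpha) ^+ n) =
      C `^ alpha * v ^+ n by rewrite hU /v expr_div_n; field; rewrite gt_eqF.
  rewrite ler_wpM2l ?powR_ge0 //; apply: lerXn2r; [rewrite nnegrE ltW // | rewrite nnegrE ltW // | exact: vw].
have key x : (X n%:Z x < xi /\ xi <= X' n x) \/ (X' n x < xi /\ xi <= X n%:Z x) ->
    (Aset `|` Bset) x.
  move=> H; case: (lerP (`|X n%:Z x - X' n x|) h) => hz; last by right.
  left; move: hz; rewrite ler_norml => /andP[z1 z2].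
  split.
  - rewrite /A1 /=; case: H => -[] ? ?; lra.
  - apply/negP; rewrite /A2 /= -ltNge; case: H => -[] ? ?; lra.
have Ile : (\int[P]_x (`|\1_[set v | X n%:Z v < xi] x - \1_[set v | X' n v < xi] x| `^ 2)%:E
    <= (K * w ^+ n)%:E)%E.
  apply: (@le_trans _ _ (\int[P]_x (\1_(Aset `|` Bset) x)%:E)%E).
    apply: (@ge0_le_integral _ _ _ P setT measurableT).
    - by move=> x _ /=; rewrite lee_fin powR_ge0.
    - have mI : measurable_fun setT
          (fun x => `|\1_[set v | X n%:Z v < xi] x - \1_[set v | X' n v < xi] x : R|).
        apply: measurableT_comp; first exact: normr_measurable.
        apply: measurable_funB; apply: measurable_indic.
        + exact: (mXp n%:Z _ (mlt xi)).
        + exact: (mX'p n _ (mlt xi)).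
      apply/measurable_EFinP; exact: (measurableT_comp (measurable_powR 2) mI).
    - by apply/measurable_EFinP; apply: measurable_indic; exact: measurableU.
    - move=> x _ /=; rewrite lee_fin !indicE.
      case: (boolP (x \in [set v | X n%:Z v < xi])) => h1;
        case: (boolP (x \in [set v | X' n v < xi])) => h2 /=.
      + by rewrite subrr normr0 powR0.
      + rewrite subr0 normr1 powR1 mem_set //; apply: key; left; split.
        * exact: (set_mem h1).
        * by rewrite leNgt; apply/negP => H; apply: (negP h2); exact: mem_set.
      + rewrite sub0r normrN normr1 powR1 mem_set //; apply: key; right; split.
        * exact: (set_mem h2).
        * by rewrite leNgt; apply/negP => H; apply: (negP h1); exact: mem_set.
      + by rewrite subrr normr0 powR0.
  have mAB : measurable (Aset `|` Bset) by apply: measurableU.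
  rewrite (integral_indic P measurableT mAB) setIT.
  apply: le_trans (measureU2 P mA mB) _.
  apply: (@le_trans _ _ ((fine (P Aset) + fine (P Bset))%:E)%E).
    rewrite EFinD -fA -fB; exact: le_refl.
  rewrite lee_fin /K; nra.
have I0 : (0 <= \int[P]_x (`|\1_[set v | X n%:Z v < xi] x - \1_[set v | X' n v < xi] x| `^ 2)%:E)%E.
  by apply: integral_ge0 => x _; rewrite lee_fin powR_ge0.
apply: le_trans (gt0_ler_poweR _ _ _ Ile) _.
- by rewrite invr_ge0.
- by rewrite in_itv /= I0 leey.
- by rewrite in_itv /= lee_fin mulr_ge0 // leey.
rewrite poweR_EFin lee_fin powRM // powRXn //; exact: ltW.
Qed.
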